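(* The set $\mathcal M$ of universal distance matrices is nonempty. Moreover, $\mathcal M$ is an everywhere dense $G_\delta$-subset of the cone $\mathcal R$ with respect to the weak topology.
   Context: Let $\mathcal R$ be the set of all infinite real matrices $r=\{r_{i,j}\}_{i,j=1}^\infty$ with $r_{i,i}=0$, $r_{i,j}\ge 0$, $r_{i,j}=r_{j,i}$ and $r_{i,k}+r_{k,j}\ge r_{i,j}$ for all $i,j,k\in\mathbb N$ (''distance matrices''); it carries the weak topology, i.e. the topology of entrywise convergence (product topology on $\mathbb R^{\mathbb N\times\mathbb N}$). A distance matrix is proper if $r_{i,j}>0$ for all $i\ne j$. For $n\in\mathbb N$, $\mathcal R_n$ denotes the analogous set of $n\times n$ distance matrices and $p_n(r)$ denotes the upper-left (NW) $n\times n$ corner of $r$. For $q\in\mathcal R_n$, the set of admissible vectors is $A(q)=\{a\in\mathbb R^n: |a_i-a_j|\le q_{i,j}\le a_i+a_j \text{ for all } i,j=1,\dots,n\}$, i.e. the vectors $a$ such that bordering $q$ by $a$ as an extra last row and column gives a distance matrix of order $n+1$. A proper distance matrix $r\in\mathcal R$ is universal if for every $n\in\mathbb N$, every $a\in A(p_n(r))$ and every $\epsilon>0$ there exists $m\in\mathbb N$ (necessarily $m>n$ can be taken) with $\max_{1\le i\le n}|r_{i,m}-a_i|<\epsilon$; equivalently, for each $n$ the set of vectors $\{(r_{1,j},\dots,r_{n,j})\}_{j>n}$ is dense in $A(p_n(r))$. $\mathcal M$ denotes the set of universal distance matrices. *)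

(* Defs.v *)
(* concrete reals R. Indices are 0-based (paper's i=1,2,... is our 0,1,...). *)
From Stdlib Require Import Reals.
Open Scope R_scope.

Definition mat := nat -> nat -> R.

Definition is_dist (r : mat) : Prop :=
  (forall i, r i i = 0) /\
  (forall i j, 0 <= r i j) /\
  (forall i j, r i j = r j i) /\
  (forall i j k, r i j <= r i k + r k j).

Definition is_proper (r : mat) : Prop := forall i j, i <> j -> 0 < r i j.

Definition admissible (n : nat) (r : mat) (a : nat -> R) : Prop :=
  forall i j, (i < n)%nat -> (j < n)%nat ->
    Rabs (a i - a j) <= r i j /\ r i j <= a i + a j.

Definition universal (r : mat) : Prop :=
  is_dist r /\ is_proper r /\
  forall (n : nat) (a : nat -> R) (eps : R),
    admissible n r a -> 0 < eps ->
    exists m : nat, forall i, (i < n)%nat -> Rabs (r i m - a i) < eps.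

(* Weak topology = product topology on R^(N x N): U is open iff around each of
   its points it contains a basic cylinder constraining finitely many entries
   (every finite set of entries lies in some NW n x n corner). *)
Definition weak_open (U : mat -> Prop) : Prop :=
  forall r, U r -> exists (n : nat) (eps : R), 0 < eps /\
    forall s, (forall i j, (i < n)%nat -> (j < n)%nat -> Rabs (s i j - r i j) < eps) -> U s.

Definition dense_in_cone (D : mat -> Prop) : Prop :=
  forall U, weak_open U -> (exists s, is_dist s /\ U s) -> exists r, D r /\ U r.

Definition Gdelta_in_cone (D : mat -> Prop) : Prop :=
  exists U : nat -> mat -> Prop, (forall k, weak_open (U k)) /\
    forall r, D r <-> (is_dist r /\ forall k, U k r).

(* Main.v *)
Require Import Defs.
From Stdlib Require Import Reals Lra Lia Arith ZArith Cantor.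
Open Scope R_scope.

Fixpoint mn (p : nat) (f : nat -> R) : R :=
  match p with 0 => f 0%nat | S p' => Rmin (mn p' f) (f (S p')) end.
Fixpoint mx (p : nat) (f : nat -> R) : R :=
  match p with 0 => f 0%nat | S p' => Rmax (mx p' f) (f (S p')) end.

Lemma mn_le p f i : (i <= p)%nat -> mn p f <= f i.
Proof.
  induction p; intros H; simpl.
  - replace i with 0%nat by lia; lra.
  - destruct (Nat.eq_dec i (S p)) as [->|Hn].
    + apply Rmin_r.
    + eapply Rle_trans; [apply Rmin_l|]. apply IHp; lia.
Qed.
Lemma mn_ex p f : exists i, (i <= p)%nat /\ mn p f = f i.
Proof.
  induction p; simpl.
  - exists 0%nat; split; auto.
  - destruct IHp as [i [Hi E]]. unfold Rmin. destruct (Rle_dec (mn p f) (f (S p))).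
    + exists i; split; auto.
    + exists (S p); split; auto.
Qed.
Lemma mx_ge p f i : (i <= p)%nat -> f i <= mx p f.
Proof.
  induction p; intros H; simpl.
  - replace i with 0%nat by lia; lra.
  - destruct (Nat.eq_dec i (S p)) as [->|Hn].
    + apply Rmax_r.
    + eapply Rle_trans; [apply IHp; lia|apply Rmax_l].
Qed.
Lemma mx_ex p f : exists i, (i <= p)%nat /\ mx p f = f i.
Proof.
  induction p; simpl.
  - exists 0%nat; split; auto.
  - destruct IHp as [i [Hi E]]. unfold Rmax. destruct (Rle_dec (mx p f) (f (S p))).
    + exists (S p); split; auto.
    + exists i; split; auto.
Qed.
Lemma mn_mono p f g t : (forall i, (i <= p)%nat -> f i <= g i + t) -> mn p f <= mn p g + t.
Proof.
  intros H. destruct (mn_ex p g) as [i [Hi E]]. rewrite E.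
  eapply Rle_trans; [apply (mn_le p f i Hi)|]. apply H; auto.
Qed.
Lemma mn_glb p f t : (forall i, (i <= p)%nat -> t <= f i) -> t <= mn p f.
Proof. intros H. destruct (mn_ex p f) as [i [Hi E]]. rewrite E. auto. Qed.
Lemma mx_lub p f t : (forall i, (i <= p)%nat -> f i <= t) -> mx p f <= t.
Proof. intros H. destruct (mx_ex p f) as [i [Hi E]]. rewrite E. auto. Qed.

Lemma Rabs_le_between x y : Rabs x <= y -> -y <= x <= y.
Proof. unfold Rabs; destruct (Rcase_abs x); intros; lra. Qed.
Lemma Rabs_lt_between x y : Rabs x < y -> -y < x < y.
Proof. unfold Rabs; destruct (Rcase_abs x); intros; lra. Qed.

Definition fl (x : R) : nat := Z.to_nat (up x - 1).
Lemma fl_spec x : -1 <= x -> Rabs (INR (fl x) - x) <= 1 /\ INR (fl x) <= Rmax x 0 /\ x < INR (fl x) + 1.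
Proof.
  intros Hx. destruct (archimed x) as [H1 H2]. unfold fl.
  destruct (Z_lt_le_dec (up x - 1) 0) as [Hz|Hz].
  - assert (E0 : Z.to_nat (up x - 1) = 0%nat) by (destruct (up x - 1)%Z eqn:E; [reflexivity|lia|reflexivity]).
    rewrite E0. simpl.
    assert (up x <= 0)%Z by lia. apply IZR_le in H. 
    assert (IZR (up x) = 0 \/ IZR (up x) < 0) by lra.
    unfold Rmax; destruct (Rle_dec x 0); (split; [apply Rabs_le; lra| split; lra]).
  - rewrite INR_IZR_INZ, Z2Nat.id by lia. rewrite minus_IZR.
    unfold Rmax; destruct (Rle_dec x 0); (split; [apply Rabs_le; lra| split; lra]).
Qed.

(* projection into admissible vectors *)
Definition beta (b : mat) (p : nat) (q : nat -> R) (i : nat) : R := mn p (fun j => q j + b j i).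
Definition cc (b : mat) (p : nat) (q : nat -> R) : R :=
  Rmax 0 (mx p (fun i => mx p (fun k => (b i k - beta b p q i - beta b p q k) / 2))).
Definition G (b : mat) (p : nat) (q : nat -> R) (i : nat) : R := beta b p q i + cc b p q.

Definition metric_le (b : mat) (p : nat) : Prop :=
  (forall i, (i <= p)%nat -> b i i = 0) /\
  (forall i j, (i <= p)%nat -> (j <= p)%nat -> b i j = b j i) /\
  (forall i j k, (i <= p)%nat -> (j <= p)%nat -> (k <= p)%nat -> b i j <= b i k + b k j).

Lemma G_adm b p q : metric_le b p -> forall i k, (i <= p)%nat -> (k <= p)%nat ->
  Rabs (G b p q i - G b p q k) <= b i k /\ b i k <= G b p q i + G b p q k.
Proof.
  intros [Hd [Hs Ht]] i k Hi Hk. unfold G.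
  assert (L : forall i k, (i <= p)%nat -> (k <= p)%nat -> beta b p q i <= beta b p q k + b k i).
  { intros i0 k0 Hi0 Hk0. unfold beta. apply mn_mono. intros j Hj. 
    specialize (Ht j i0 k0 Hj Hi0 Hk0). lra. }
  split.
  - apply Rabs_le. pose proof (L i k Hi Hk) as L1. pose proof (L k i Hk Hi) as L2. clear L. rename L1 into L.
    rewrite (Hs k i) in L by auto. lra.
  - assert (C : (b i k - beta b p q i - beta b p q k) / 2 <= cc b p q).
    { unfold cc. eapply Rle_trans; [|apply Rmax_r].
      eapply Rle_trans; [|apply (mx_ge _ _ i Hi)]. apply (mx_ge _ (fun k0 => _) k Hk). }
    lra.
Qed.

Lemma cc_ge0 b p q : 0 <= cc b p q.
Proof. apply Rmax_l. Qed.

Lemma G_close b p q al t u : 0 <= t -> 0 <= u ->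
  (forall i, (i <= p)%nat -> b i i = 0) ->
  (forall i k, (i <= p)%nat -> (k <= p)%nat -> al i <= al k + b k i + t /\ b i k <= al i + al k + t) ->
  (forall j, (j <= p)%nat -> Rabs (q j - al j) <= u) ->
  forall i, (i <= p)%nat -> Rabs (G b p q i - al i) <= 2 * u + 3 * t.
Proof.
  intros Ht Hu Hd Ha Hq.
  assert (Hb : forall i, (i <= p)%nat -> al i - t - u <= beta b p q i <= al i + u).
  { intros i Hi. split.
    - unfold beta. apply mn_glb. intros j Hj. destruct (Ha i j Hi Hj) as [A _].
      specialize (Hq j Hj). apply Rabs_le_between in Hq. lra.
    - unfold beta. eapply Rle_trans; [apply (mn_le _ _ i Hi)|]. simpl. rewrite Hd by auto.
      specialize (Hq i Hi). apply Rabs_le_between in Hq. lra. }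
  assert (Hc : cc b p q <= (3 * t + 2 * u) / 2).
  { unfold cc. apply Rmax_lub.
    - lra.
    - apply mx_lub; intros i Hi; apply mx_lub; intros k Hk.
      destruct (Ha i k Hi Hk) as [_ B]. pose proof (Hb i Hi); pose proof (Hb k Hk). lra. }
  intros i Hi. pose proof (cc_ge0 b p q). pose proof (Hb i Hi). unfold G.
  apply Rabs_le. lra.
Qed.
Fixpoint cdec (w : nat) (i : nat) : nat :=
  match i with 0 => fst (of_nat w) | S i' => cdec (snd (of_nat w)) i' end.
Fixpoint enc (n : nat) (c : nat -> nat) : nat :=
  match n with 0 => 0%nat | S n' => to_nat (c 0%nat, enc n' (fun i => c (S i))) end.
Lemma enc_spec n : forall c i, (i < n)%nat -> cdec (enc n c) i = c i.
Proof.
  induction n; intros c i Hi; [lia|].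
  change (enc (S n) c) with (to_nat (c 0%nat, enc n (fun i => c (S i)))).
  destruct i.
  - change (fst (of_nat (to_nat (c 0%nat, enc n (fun i => c (S i))))) = c 0%nat).
    rewrite cancel_of_to. reflexivity.
  - change (cdec (snd (of_nat (to_nat (c 0%nat, enc n (fun i => c (S i)))))) i = c (S i)).
    rewrite cancel_of_to. simpl snd. rewrite IHn by lia. reflexivity.
Qed.

Definition tn k := fst (of_nat (fst (of_nat k))).
Definition td k := fst (of_nat (snd (of_nat (fst (of_nat k))))).
Definition tw k := snd (of_nat (snd (of_nat (fst (of_nat k))))).
Lemma task_surj n d w B : exists k, (B <= k)%nat /\ tn k = n /\ td k = d /\ tw k = w.
Proof.
  exists (to_nat (to_nat (n, to_nat (d, w)), B)). unfold tn, td, tw.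
  rewrite !cancel_of_to. cbn [fst snd]. rewrite !cancel_of_to. cbn [fst snd]. rewrite !cancel_of_to. cbn [fst snd].
  split; auto. pose proof (to_nat_non_decreasing (to_nat (n, to_nat (d, w))) B). lia.
Qed.

Definition Inv (b : mat) (L : nat) : Prop :=
  (forall i, (i < L)%nat -> b i i = 0) /\
  (forall i j, (i < L)%nat -> (j < L)%nat -> i <> j -> 0 < b i j) /\
  (forall i j, (i < L)%nat -> (j < L)%nat -> b i j = b j i) /\
  (forall i j k, (i < L)%nat -> (j < L)%nat -> (k < L)%nat -> b i j <= b i k + b k j).

Lemma Inv_nonneg b L i j : Inv b L -> (i < L)%nat -> (j < L)%nat -> 0 <= b i j.
Proof.
  intros [H0 [H1 _]] Hi Hj. destruct (Nat.eq_dec i j) as [->|Hn].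
  - rewrite H0; auto; lra.
  - apply Rlt_le, H1; auto.
Qed.

Lemma Inv_metric_le b L p : Inv b L -> (p < L)%nat -> metric_le b p.
Proof.
  intros [H0 [H1 [H2 H3]]] Hp. split; [|split]; intros; [apply H0|apply H2|apply H3]; lia.
Qed.

Definition ext (b : mat) (N : nat) (e : nat -> R) : mat := fun i j =>
  if Nat.eq_dec i N then (if Nat.eq_dec j N then 0 else e j)
  else if Nat.eq_dec j N then e i else b i j.

Lemma ext_inv b N e : Inv b N -> (forall j, (j < N)%nat -> 0 < e j) ->
  (forall j l, (j < N)%nat -> (l < N)%nat -> e j <= e l + b l j) ->
  (forall j l, (j < N)%nat -> (l < N)%nat -> b j l <= e j + e l) ->
  Inv (ext b N e) (S N).
Proof.
  intros HI Hp HL HS. pose proof HI as [H0 [H1 [H2 H3]]].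
  unfold ext. split; [|split; [|split]].
  - intros i Hi. destruct (Nat.eq_dec i N); auto. apply H0; lia.
  - intros i j Hi Hj Hij. destruct (Nat.eq_dec i N); destruct (Nat.eq_dec j N); subst; try lia.
    + apply Hp; lia.
    + apply Hp; lia.
    + apply H1; lia.
  - intros i j Hi Hj. destruct (Nat.eq_dec i N); destruct (Nat.eq_dec j N); subst; auto.
    apply H2; lia.
  - intros i j k Hi Hj Hk.
    destruct (Nat.eq_dec i N) as [Ei|Ei]; destruct (Nat.eq_dec j N) as [Ej|Ej];
      destruct (Nat.eq_dec k N) as [Ek|Ek].
    + lra.
    + pose proof (Hp k ltac:(lia)); lra.
    + lra.
    + apply HL; lia.
    + lra.
    + pose proof (HL i k ltac:(lia) ltac:(lia)). rewrite (H2 i k) by lia. lra.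
    + apply HS; lia.
    + apply H3; lia.
Qed.

Lemma row_props b N p q d : Inv b N -> (N = 0 \/ p < N)%nat -> 0 < d ->
  let e := fun j => mn p (fun i => G b p q i + b i j) + d in
  (forall j, (j < N)%nat -> 0 < e j) /\
  (forall j l, (j < N)%nat -> (l < N)%nat -> e j <= e l + b l j) /\
  (forall j l, (j < N)%nat -> (l < N)%nat -> b j l <= e j + e l).
Proof.
  intros HI HpN Hd e. destruct HpN as [-> | HpN].
  { split; [|split]; intros; lia. }
  pose proof HI as [H0 [H1 [H2 H3]]].
  pose proof (Inv_metric_le b N p HI HpN) as HM.
  pose proof (G_adm b p q HM) as HA.
  assert (Ga : forall i, (i <= p)%nat -> 0 <= G b p q i).
  { intros i Hi. destruct (HA i i Hi Hi) as [_ B]. rewrite H0 in B by lia. lra. }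
  split; [|split].
  - intros j Hj. unfold e. assert (0 <= mn p (fun i => G b p q i + b i j)); [|lra].
    apply mn_glb. intros i Hi. pose proof (Ga i Hi). pose proof (Inv_nonneg b N i j HI ltac:(lia) Hj). lra.
  - intros j l Hj Hl. unfold e. assert (mn p (fun i => G b p q i + b i j) <= mn p (fun i => G b p q i + b i l) + b l j); [|lra].
    apply mn_mono. intros i Hi. pose proof (H3 i j l ltac:(lia) Hj Hl). lra.
  - intros j l Hj Hl. unfold e.
    destruct (mn_ex p (fun i => G b p q i + b i j)) as [i [Hi Ei]].
    destruct (mn_ex p (fun i => G b p q i + b i l)) as [i' [Hi' Ei']].
    rewrite Ei, Ei'.
    pose proof (H3 j l i Hj Hl ltac:(lia)). pose proof (H3 i l i' ltac:(lia) Hl ltac:(lia)).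
    destruct (HA i i' Hi Hi') as [_ B]. rewrite (H2 j i) in * by lia. lra.
Qed.

Definition newrow (b : mat) (N k : nat) : nat -> R :=
  let p := pred (Nat.min (tn k) N) in
  let q := fun i => INR (cdec (tw k) i) / INR (S (td k)) in
  fun j => mn p (fun i => G b p q i + b i j) + / INR (S k).

Fixpoint build (t0 : mat) (n0 k : nat) : mat :=
  match k with
  | 0 => t0
  | S k' => ext (build t0 n0 k') (n0 + k') (newrow (build t0 n0 k') (n0 + k') k')
  end.

Lemma build_inv t0 n0 k : Inv t0 n0 -> Inv (build t0 n0 k) (n0 + k).
Proof.
  intros H0. induction k; simpl.
  - rewrite Nat.add_0_r; auto.
  - replace (n0 + S k)%nat with (S (n0 + k)) by lia.
    assert (Hd : 0 < / INR (S k)) by (apply Rinv_0_lt_compat, lt_0_INR; lia).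
    destruct (row_props (build t0 n0 k) (n0 + k) (pred (Nat.min (tn k) (n0 + k)))
      (fun i => INR (cdec (tw k) i) / INR (S (td k))) (/ INR (S k)) IHk ltac:(lia) Hd)
      as [A [B C]].
    apply ext_inv; auto.
Qed.

Lemma build_stable t0 n0 k k' i j : (k <= k')%nat -> (i < n0 + k)%nat -> (j < n0 + k)%nat ->
  build t0 n0 k' i j = build t0 n0 k i j.
Proof.
  intros Hk Hi Hj. induction Hk; auto.
  simpl. unfold ext. destruct (Nat.eq_dec i (n0 + m)); [lia|]. destruct (Nat.eq_dec j (n0 + m)); [lia|]. auto.
Qed.
Definition rfin (t0 : mat) (n0 : nat) : mat := fun i j => build t0 n0 (S (Nat.max i j)) i j.

Lemma rfin_eq t0 n0 k i j : (i < n0 + k)%nat -> (j < n0 + k)%nat -> rfin t0 n0 i j = build t0 n0 k i j.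
Proof.
  intros Hi Hj. unfold rfin.
  rewrite <- (build_stable t0 n0 (S (Nat.max i j)) (Nat.max k (S (Nat.max i j))) i j) by lia.
  apply build_stable; lia.
Qed.

Lemma div_close x y D : 0 < D -> Rabs (x - y * D) <= 1 -> Rabs (x / D - y) <= / D.
Proof.
  intros HD H. replace (x / D - y) with ((x - y * D) * / D) by (field; lra).
  rewrite Rabs_mult, (Rabs_pos_eq (/ D)) by (left; apply Rinv_0_lt_compat; auto).
  rewrite <- (Rmult_1_l (/ D)) at 2. apply Rmult_le_compat_r; auto.
  left; apply Rinv_0_lt_compat; auto.
Qed.

Lemma inv_small x : 0 < x -> forall k : nat, (fl (1 / x) <= k)%nat -> / INR (S k) < x.
Proof.
  intros Hx k Hk. assert (Hp : 0 < 1 / x) by (apply Rdiv_lt_0_compat; lra).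
  destruct (fl_spec (1 / x)) as [_ [_ H]]; [lra|].
  apply le_INR in Hk. rewrite S_INR.
  assert (1 / x < INR k + 1) by lra.
  apply (Rmult_lt_reg_l (INR k + 1)); [pose proof (pos_INR k); lra|].
  rewrite Rinv_r by (pose proof (pos_INR k); lra).
  apply (Rmult_lt_reg_l (1 / x)); auto.
  replace (1 / x * 1) with (1 / x) by ring.
  replace (1 / x * ((INR k + 1) * x)) with (INR k + 1) by (field; lra). lra.
Qed.

Lemma construct t0 n0 : Inv t0 n0 ->
  universal (rfin t0 n0) /\ (forall i j, (i < n0)%nat -> (j < n0)%nat -> rfin t0 n0 i j = t0 i j).
Proof.
  intros H0.
  assert (Hagree : forall i j, (i < n0)%nat -> (j < n0)%nat -> rfin t0 n0 i j = t0 i j).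
  { intros i j Hi Hj. rewrite (rfin_eq t0 n0 0) by lia. reflexivity. }
  split; [|exact Hagree].
  assert (HI : forall K, Inv (build t0 n0 K) (n0 + K)) by (intros; apply build_inv; auto).
  split; [|split].
  -
    split; [|split; [|split]].
    + intros i. rewrite (rfin_eq t0 n0 (S i)) by lia. destruct (HI (S i)) as [A _]. apply A; lia.
    + intros i j. rewrite (rfin_eq t0 n0 (S (Nat.max i j))) by lia. apply (Inv_nonneg _ _ _ _ (HI _)); lia.
    + intros i j. rewrite !(rfin_eq t0 n0 (S (Nat.max i j))) by lia.
      destruct (HI (S (Nat.max i j))) as [_ [_ [A _]]]. apply A; lia.
    + intros i j k. set (K := S (Nat.max i (Nat.max j k))).
      rewrite !(rfin_eq t0 n0 K) by (unfold K; lia).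
      destruct (HI K) as [_ [_ [_ A]]]. apply A; unfold K; lia.
  - intros i j Hij. rewrite (rfin_eq t0 n0 (S (Nat.max i j))) by lia.
    destruct (HI (S (Nat.max i j))) as [_ [A _]]. apply A; auto; lia.
  - intros n al eps Hadm Heps. destruct n as [|n'].
    { exists 0%nat. intros; lia. }
    set (n := S n') in *.
    set (d := fl (1 / (eps / 4))).
    set (c := fun i => fl (al i * INR (S d))).
    set (w := enc n c).
    destruct (task_surj n d w (Nat.max n (fl (1 / (eps / 2))))) as [k [Hk [Htn [Htd Htw]]]].
    exists (n0 + k)%nat. intros i Hi.
    set (b := build t0 n0 k).
    set (q := fun i => INR (cdec w i) / INR (S d)).
    assert (Hb : forall i j, (i < n)%nat -> (j < n)%nat -> rfin t0 n0 i j = b i j).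
    { intros; apply rfin_eq; lia. }
    pose proof (HI k) as HIk. fold b in HIk.
    pose proof HIk as [B0 [B1 [B2 B3]]].
    assert (Hp : pred (Nat.min n (n0 + k)) = n') by (unfold n; lia).
    assert (Hrow : rfin t0 n0 i (n0 + k)%nat = mn n' (fun l => G b n' q l + b l i) + / INR (S k)).
    { rewrite (rfin_eq t0 n0 (S k)) by lia. simpl. unfold ext.
      destruct (Nat.eq_dec i (n0 + k)); [lia|]. destruct (Nat.eq_dec (n0 + k) (n0 + k)); [|lia].
      unfold newrow. rewrite Htn, Htd, Htw, Hp. reflexivity. }
    rewrite Hrow.
    assert (HM : metric_le b n') by (apply (Inv_metric_le b (n0 + k)); auto; lia).
    assert (Hmn : mn n' (fun l => G b n' q l + b l i) = G b n' q i).
    { apply Rle_antisym.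
      - eapply Rle_trans; [apply (mn_le _ _ i); unfold n in Hi; lia|]. rewrite B0 by lia. lra.
      - apply mn_glb. intros l Hl. destruct (G_adm b n' q HM i l ltac:(unfold n in Hi; lia) Hl) as [A _].
        apply Rabs_le_between in A. rewrite (B2 l i) by lia. lra. }
    rewrite Hmn.
    assert (Hal0 : forall j, (j < n)%nat -> 0 <= al j).
    { intros j Hj. destruct (Hadm j j Hj Hj) as [_ A]. rewrite Hb, B0 in A by lia. lra. }
    assert (HD : 0 < INR (S d)) by (apply lt_0_INR; lia).
    assert (Hclose : Rabs (G b n' q i - al i) <= 2 * / INR (S d) + 3 * 0).
    { apply (G_close b n' q al 0 (/ INR (S d))).
      - lra.
      - left; apply Rinv_0_lt_compat; auto.
      - intros; apply B0; lia.
      - intros i0 k0 Hi0 Hk0. destruct (Hadm i0 k0 ltac:(unfold n; lia) ltac:(unfold n; lia)) as [A1 A2].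
        rewrite Hb in A1, A2 by (unfold n; lia). apply Rabs_le_between in A1.
        rewrite (B2 k0 i0) by lia. lra.
      - intros j Hj. unfold q, w. rewrite enc_spec by (unfold n; lia). unfold c.
        apply div_close; auto. destruct (fl_spec (al j * INR (S d))) as [A _]; auto.
        pose proof (Hal0 j ltac:(unfold n; lia)). assert (0 <= al j * INR (S d)) by (apply Rmult_le_pos; lra). lra.
      - unfold n in Hi; lia. }
    assert (E1 : / INR (S d) < eps / 4) by (apply inv_small; [lra|unfold d; lia]).
    assert (E2 : / INR (S k) < eps / 2) by (apply inv_small; [lra|lia]).
    assert (0 < / INR (S k)) by (apply Rinv_0_lt_compat, lt_0_INR; lia).
    apply Rabs_le_between in Hclose. apply Rabs_def1; lra.
Qed.
Lemma dense_univ : dense_in_cone universal.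
Proof.
  intros U HU [s [Hs HUs]]. destruct (HU s HUs) as [n [eps [He Hcyl]]].
  destruct Hs as [S0 [S1 [S2 S3]]].
  set (t0 := fun i j => if Nat.eq_dec i j then 0 else s i j + eps / 2).
  assert (Ht : Inv t0 n).
  { unfold t0. split; [|split; [|split]].
    - intros i _. destruct (Nat.eq_dec i i); [auto|lia].
    - intros i j _ _ Hij. destruct (Nat.eq_dec i j); [lia|]. pose proof (S1 i j); lra.
    - intros i j _ _. destruct (Nat.eq_dec i j); destruct (Nat.eq_dec j i); try lia; auto. rewrite S2; auto.
    - intros i j k _ _ _.
      destruct (Nat.eq_dec i j) as [Eij|Eij]; destruct (Nat.eq_dec i k) as [Eik|Eik];
        destruct (Nat.eq_dec k j) as [Ekj|Ekj]; try (subst; lia);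
        pose proof (S1 i j); pose proof (S1 i k); pose proof (S1 k j); try lra.
      + subst. lra.
      + subst. lra.
      + pose proof (S3 i j k). lra. }
  destruct (construct t0 n Ht) as [Hu Hag].
  exists (rfin t0 n). split; auto. apply Hcyl. intros i j Hi Hj. rewrite Hag by auto.
  unfold t0. destruct (Nat.eq_dec i j) as [->|_].
  - rewrite S0. rewrite Rminus_0_r, Rabs_R0; auto.
  - replace (s i j + eps / 2 - s i j) with (eps / 2) by ring. rewrite Rabs_pos_eq; lra.
Qed.

Lemma exists_univ : exists r, universal r.
Proof.
  destruct (dense_univ (fun _ => True)) as [r [Hr _]].
  - intros r _. exists 0%nat, 1. split; [lra|auto].
  - exists (fun _ _ => 0). split; auto. split; [|split; [|split]]; intros; lra.
  - eauto.
Qed.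

Lemma max_choice K (Rl : nat -> nat -> Prop) :
  (forall v M M', (M <= M')%nat -> Rl v M -> Rl v M') ->
  (forall v, (v <= K)%nat -> exists M, Rl v M) -> exists M, forall v, (v <= K)%nat -> Rl v M.
Proof.
  intros Hm. induction K; intros H.
  - destruct (H 0%nat ltac:(lia)) as [M HM]. exists M. intros v Hv. replace v with 0%nat by lia. auto.
  - destruct IHK as [M1 HM1]; [intros; apply H; lia|].
    destruct (H (S K) ltac:(lia)) as [M2 HM2]. exists (Nat.max M1 M2). intros v Hv.
    destruct (Nat.eq_dec v (S K)) as [->|Hn].
    + apply (Hm _ M2); auto; lia.
    + apply (Hm _ M1); [lia|]. apply HM1; lia.
Qed.

Lemma fin_choice n : forall K (Q : (nat -> nat) -> nat -> Prop),
  (forall c c', (forall i, (i < n)%nat -> c i = c' i) -> forall m, Q c m -> Q c' m) ->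
  (forall c, (forall i, (i < n)%nat -> (c i <= K)%nat) -> exists m, Q c m) ->
  exists M, forall c, (forall i, (i < n)%nat -> (c i <= K)%nat) -> exists m, (m < M)%nat /\ Q c m.
Proof.
  induction n; intros K Q HR H.
  - destruct (H (fun _ => 0%nat)) as [m Hm]; [intros; lia|]. exists (S m). intros c _.
    exists m. split; [lia|]. apply (HR (fun _ => 0%nat)); auto. intros; lia.
  - set (upd := fun (v : nat) (c : nat -> nat) (i : nat) => if Nat.eq_dec i n then v else c i).
    destruct (max_choice K (fun v M => forall c, (forall i, (i < n)%nat -> (c i <= K)%nat) ->
               exists m, (m < M)%nat /\ Q (upd v c) m)) as [M HM].
    + intros v M M' HMM Hv c Hc. destruct (Hv c Hc) as [m [Hm Q1]]. exists m; split; auto; lia.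
    + intros v Hv. apply (IHn K (fun c m => Q (upd v c) m)).
      * intros c c' Hcc m. apply HR. intros i Hi. unfold upd. destruct (Nat.eq_dec i n); auto.
        apply Hcc; lia.
      * intros c Hc. apply H. intros i Hi. unfold upd. destruct (Nat.eq_dec i n); auto. apply Hc; lia.
    + exists M. intros c Hc. destruct (HM (c n) ltac:(apply Hc; lia) c ltac:(intros; apply Hc; lia)) as [m [Hm Qm]].
      exists m. split; auto. apply (HR (upd (c n) c)); auto.
      intros i Hi. unfold upd. destruct (Nat.eq_dec i n); subst; auto.
Qed.
Definition Pu (n e B : nat) (s : mat) : Prop :=
  forall a, admissible n s a -> (forall i, (i < n)%nat -> a i <= INR B) ->
  exists m, forall i, (i < n)%nat -> Rabs (s i m - a i) < / INR (S e).
Definition Wu (n e B : nat) (r : mat) : Prop :=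
  exists N eta, 0 < eta /\ forall s, (forall i j, (i < N)%nat -> (j < N)%nat -> Rabs (s i j - r i j) < eta) -> Pu n e B s.
Definition Vp (i j : nat) (r : mat) : Prop := i <> j -> 0 < r i j.

Lemma open_and U1 U2 : weak_open U1 -> weak_open U2 -> weak_open (fun r => U1 r /\ U2 r).
Proof.
  intros H1 H2 r [A B]. destruct (H1 r A) as [n1 [e1 [He1 C1]]]. destruct (H2 r B) as [n2 [e2 [He2 C2]]].
  exists (Nat.max n1 n2), (Rmin e1 e2). split; [apply Rmin_pos; auto|].
  intros s Hs. split.
  - apply C1. intros i j Hi Hj. eapply Rlt_le_trans; [apply Hs; lia|apply Rmin_l].
  - apply C2. intros i j Hi Hj. eapply Rlt_le_trans; [apply Hs; lia|apply Rmin_r].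
Qed.

Lemma open_Vp i j : weak_open (Vp i j).
Proof.
  intros r Hr. destruct (Nat.eq_dec i j) as [->|Hn].
  - exists 0%nat, 1. split; [lra|]. intros s _ H. lia.
  - exists (S (Nat.max i j)), (r i j). split; [auto|]. intros s Hs _.
    specialize (Hs i j ltac:(lia) ltac:(lia)). apply Rabs_lt_between in Hs. lra.
Qed.

Lemma open_Wu n e B : weak_open (Wu n e B).
Proof.
  intros r [N [eta [He HP]]]. exists N, (eta / 2). split; [lra|].
  intros s' Hs'. exists N, (eta / 2). split; [lra|]. intros s Hs. apply HP.
  intros i j Hi Hj. specialize (Hs i j Hi Hj). specialize (Hs' i j Hi Hj).
  apply Rabs_lt_between in Hs. apply Rabs_lt_between in Hs'. apply Rabs_def1; lra.
Qed.

Lemma mul_close x y dl : 0 < dl -> Rabs (x - y / dl) <= 1 -> Rabs (x * dl - y) <= dl.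
Proof.
  intros Hd H. replace (x * dl - y) with ((x - y / dl) * dl) by (field; lra).
  rewrite Rabs_mult, (Rabs_pos_eq dl) by lra.
  apply Rle_trans with (1 * dl); [apply Rmult_le_compat_r; lra|lra].
Qed.

Lemma univ_W r n e B : universal r -> Wu n e B r.
Proof.
  intros [Hd [Hp Hu]]. destruct n as [|n'].
  { exists 0%nat, 1. split; [lra|]. intros s _ a _ _. exists 0%nat. intros; lia. }
  set (n := S n') in *.
  pose proof Hd as [D0 [D1 [D2 D3]]].
  assert (HM : metric_le r n') by (split; [|split]; intros; auto).
  set (eps := / INR (S e)).
  assert (Heps : 0 < eps) by (apply Rinv_0_lt_compat, lt_0_INR; lia).
  set (dl := eps / 8).
  assert (Hdl : 0 < dl) by (unfold dl; lra).
  set (K := S (fl (INR B / dl))).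
  set (gq := fun (c : nat -> nat) j => INR (c j) * dl).
  destruct (fin_choice n K (fun c m => exists c', (forall i, (i < n)%nat -> c' i = c i) /\
             forall i, (i < n)%nat -> Rabs (r i m - G r n' (gq c') i) < dl)) as [M HM'].
  - intros c c' Hcc m [c'' [H1 H2]]. exists c''. split; auto. intros i Hi. rewrite H1, Hcc; auto.
  - intros c _. destruct (Hu n (G r n' (gq c)) dl) as [m Hm]; auto.
    + intros i j Hi Hj. apply G_adm; auto; unfold n in *; lia.
    + exists m, c. split; auto.
  - exists (Nat.max n M), dl. split; auto. intros s Hs a Ha HaB.
    assert (Hapos : forall i, (i < n)%nat -> - dl / 2 <= a i).
    { intros i Hi. destruct (Ha i i Hi Hi) as [_ A]. specialize (Hs i i ltac:(lia) ltac:(lia)).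
      rewrite D0 in Hs. apply Rabs_lt_between in Hs. lra. }
    set (c := fun i => fl (a i / dl)).
    assert (Hc : forall i, (i < n)%nat -> Rabs (INR (c i) - a i / dl) <= 1 /\ INR (c i) <= Rmax (a i / dl) 0).
    { intros i Hi. assert (-1 <= a i / dl).
      { pose proof (Hapos i Hi). apply (Rmult_le_reg_r dl); auto. unfold Rdiv. rewrite Rmult_assoc, Rinv_l by lra. lra. }
      destruct (fl_spec (a i / dl)) as [A [B' _]]; auto. }
    destruct (HM' c) as [m [Hm [c' [Hc'1 Hc'2]]]].
    { intros i Hi. destruct (Hc i Hi) as [_ A].
      assert (INR (c i) < INR K).
      { unfold K. rewrite S_INR. destruct (fl_spec (INR B / dl)) as [_ [_ F]].
        - pose proof (pos_INR B). assert (0 <= INR B / dl) by (unfold Rdiv; apply Rmult_le_pos; [lra|left; apply Rinv_0_lt_compat; lra]). lra.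
        - assert (a i / dl <= INR B / dl).
          { unfold Rdiv. apply Rmult_le_compat_r; [left; apply Rinv_0_lt_compat; auto|]. apply HaB; auto. }
          pose proof (pos_INR B). assert (0 <= INR B / dl) by (unfold Rdiv; apply Rmult_le_pos; [lra|left; apply Rinv_0_lt_compat; lra]).
          unfold Rmax in A. destruct (Rle_dec (a i / dl) 0); lra. }
      apply INR_lt in H. lia. }
    exists m. intros i Hi.
    assert (Hcl : Rabs (G r n' (gq c') i - a i) <= 2 * dl + 3 * dl).
    { apply (G_close r n' (gq c') a dl dl); try lra.
      - intros; auto.
      - intros i0 k0 Hi0 Hk0. destruct (Ha i0 k0 ltac:(unfold n; lia) ltac:(unfold n; lia)) as [A1 A2].
        pose proof (Hs i0 k0 ltac:(unfold n; lia) ltac:(unfold n; lia)) as S1.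
        apply Rabs_lt_between in S1. apply Rabs_le_between in A1.
        rewrite (D2 k0 i0). lra.
      - intros j Hj. unfold gq. rewrite Hc'1 by (unfold n; lia). apply mul_close; auto.
        apply Hc; unfold n; lia.
      - unfold n in Hi; lia. }
    pose proof (Hc'2 i Hi) as H2. pose proof (Hs i m ltac:(lia) ltac:(lia)) as H3.
    apply Rabs_le_between in Hcl. apply Rabs_lt_between in H2. apply Rabs_lt_between in H3.
    fold eps. apply Rabs_def1; unfold dl in *; lra.
Qed.

Definition f1 k := fst (of_nat k).
Definition f2 k := fst (of_nat (snd (of_nat k))).
Definition f3 k := fst (of_nat (snd (of_nat (snd (of_nat k))))).
Definition f4 k := fst (of_nat (snd (of_nat (snd (of_nat (snd (of_nat k))))))).
Definition f5 k := snd (of_nat (snd (of_nat (snd (of_nat (snd (of_nat k))))))).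
Definition Uk (k : nat) (r : mat) : Prop := Vp (f1 k) (f2 k) r /\ Wu (f3 k) (f4 k) (f5 k) r.

Lemma Uk_surj i j n e B : exists k, f1 k = i /\ f2 k = j /\ f3 k = n /\ f4 k = e /\ f5 k = B.
Proof.
  exists (to_nat (i, to_nat (j, to_nat (n, to_nat (e, B))))).
  unfold f1, f2, f3, f4, f5. repeat (rewrite cancel_of_to; cbn [fst snd]). auto.
Qed.

Lemma Gdelta_univ : Gdelta_in_cone universal.
Proof.
  exists Uk. split.
  - intros k. apply open_and; [apply open_Vp|apply open_Wu].
  - intros r. split.
    + intros Hu. split; [apply Hu|]. intros k. split.
      * intros H. apply Hu; auto.
      * apply univ_W; auto.
    + intros [Hd HU]. split; [auto|split].
      * intros i j Hij. destruct (Uk_surj i j 0 0 0) as [k [E1 [E2 _]]].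
        destruct (HU k) as [A _]. rewrite E1, E2 in A. auto.
      * intros n a eps Ha Heps.
        set (e := fl (1 / eps)).
        set (B := S (fl (Rmax 0 (mx n a)))).
        destruct (Uk_surj 0 0 n e B) as [k [_ [_ [E3 [E4 E5]]]]].
        destruct (HU k) as [_ [N [eta [Heta HP]]]]. rewrite E3, E4, E5 in HP.
        assert (Hr : forall i j, (i < N)%nat -> (j < N)%nat -> Rabs (r i j - r i j) < eta).
        { intros i j _ _. rewrite Rminus_diag, Rabs_R0; auto. }
        destruct (HP r Hr a) as [m Hm]; auto.
        { intros i Hi. unfold B. rewrite S_INR.
          destruct (fl_spec (Rmax 0 (mx n a))) as [_ [_ F]]. { pose proof (Rmax_l 0 (mx n a)); lra. }
          pose proof (Rmax_r 0 (mx n a)). pose proof (mx_ge n a i ltac:(lia)). lra. }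
        exists m. intros i Hi. eapply Rlt_trans; [apply Hm; auto|]. apply inv_small; auto.
Qed.

Theorem theorem1 :
  (exists r : mat, universal r) /\
  dense_in_cone universal /\ Gdelta_in_cone universal.
Proof.
  split; [exact exists_univ|split; [exact dense_univ|exact Gdelta_univ]].
Qed.
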